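(* Let $\Omega$ be the closure of a bounded domain in $\mathbb{R}^d$, let $X$ be a Banach space of functions on $\Omega$ with $C(\Omega)\subset X$ and $\|g\|_X\le C_X\|g\|_{C(\Omega)}$ for $g\in C(\Omega)$, and let $K$ be a compact subset of $C(\Omega)$. Let ${\bf x}=(x_1,\dots,x_m)\in\Omega^m$, $f\in K$, $w:=\lambda_{\bf x}(f)$, and assume $R(K_w)_X\neq0$. Define on $C(\Omega)$ $$\mathcal{L}'_K(g):=\|\lambda_{\bf x}(g)-w\|+\operatorname{dist}(g,K)_{C(\Omega)} .$$ Let $C>2$ and let $\delta>0$ satisfy $$C_X\varepsilon+2R(K(w,2\varepsilon))_X\le C\,R(K_w)_X,\qquad\varepsilon:=2\delta$$ (this holds for all sufficiently small $\delta$). Let $\Sigma\subset C(\Omega)$ satisfy $\operatorname{dist}(K,\Sigma)_{C(\Omega)}<\delta$ and let $\hat f\in\mathop{\rm argmin}_{g\in\Sigma}\mathcal{L}'_K(g)$ be any minimizer. Then $\|f-\hat f\|_X\le C\,R(K_w)_X$.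
   Context: $\lambda_{\bf x}(g):=(g(x_1),\dots,g(x_m))$; on $\mathbb{R}^m$, $\|v\|:=\big[\frac1m\sum_{j=1}^m|v_j|^2\big]^{1/2}$. $\operatorname{dist}(g,K)_{C(\Omega)}:=\inf_{h\in K}\|g-h\|_{C(\Omega)}$; for $A,B\subset C(\Omega)$, $\operatorname{dist}(A,B)_{C(\Omega)}:=\sup_{a\in A}\inf_{b\in B}\|a-b\|_{C(\Omega)}$. $K_{w'}:=\{h\in K:\lambda_{\bf x}(h)=w'\}$, $K(w,\varepsilon):=\bigcup_{w'\in\mathbb{R}^m,\ \|w'-w\|\le\varepsilon}K_{w'}$. For $S\subset X$, $R(S)_X:=\inf\{r:\ S\subset B(z,r)_X\text{ for some }z\in X\}$ (Chebyshev radius in $X$). *)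

(* Defs.v *)
From HB Require Import structures.
From mathcomp Require Import all_boot all_order all_algebra.
From mathcomp Require Import all_classical all_reals all_analysis.
Set Implicit Arguments. Unset Strict Implicit. Unset Printing Implicit Defensive.
Import Order.TTheory GRing.Theory Num.Theory.
Import numFieldNormedType.Exports.
Local Open Scope classical_set_scope.
Local Open Scope ring_scope.

Section defs.
Variables (R : realType) (d m : nat).
Notation pt := 'rV[R]_d.

Definition closure_of_bounded_domain (Om : set pt) : Prop :=
  exists D : set pt, [/\ open D, connected D, D !=set0, bounded_set D & Om = closure D].

(* C(Omega): functions continuous on Omega (only their values on Omega matter) *)
Definition contOn (Om : set pt) (g : pt -> R) : Prop := {within Om, continuous g}.

Definition supnorm (Om : set pt) (g : pt -> R) : R := sup [set `|g x| | x in Om].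

Definition distC (Om : set pt) (g : pt -> R) (K : set (pt -> R)) : R :=
  inf [set supnorm Om (g \- h) | h in K].

Definition distCset (Om : set pt) (A B : set (pt -> R)) : R :=
  sup [set distC Om a B | a in A].

Definition compactC (Om : set pt) (K : set (pt -> R)) : Prop :=
  (forall g, K g -> contOn Om g) /\ compact (K : set {uniform` Om -> R}).

Definition lam (x : 'I_m -> pt) (g : pt -> R) : 'I_m -> R := fun j => g (x j).

Definition vnorm (v : 'I_m -> R) : R := Num.sqrt (m%:R^-1 * \sum_(j < m) `|v j| ^+ 2).

Definition vsub (v w : 'I_m -> R) : 'I_m -> R := fun j => v j - w j.

Definition Kfib (x : 'I_m -> pt) (K : set (pt -> R)) (w' : 'I_m -> R) : set (pt -> R) :=
  [set h | K h /\ lam x h = w'].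

Definition Knbhd (x : 'I_m -> pt) (K : set (pt -> R)) (w : 'I_m -> R) (eps : R)
  : set (pt -> R) :=
  \bigcup_(w' in [set w' | vnorm (vsub w' w) <= eps]) Kfib x K w'.

Definition chebR (X : normedModType R) (iota : (pt -> R) -> X) (S : set (pt -> R)) : R :=
  inf [set r | exists z : X, forall g, S g -> `|iota g - z| <= r].

Definition Lprime (Om : set pt) (x : 'I_m -> pt) (K : set (pt -> R)) (w : 'I_m -> R)
  (g : pt -> R) : R :=
  vnorm (vsub (lam x g) w) + distC Om g K.

End defs.

(* Main.v *)
Require Import Defs.
From HB Require Import structures.
From mathcomp Require Import all_boot all_order all_algebra.
From mathcomp Require Import all_classical all_reals all_analysis.
From mathcomp Require Import ring lra.
Set Implicit Arguments.
Import Order.TTheory GRing.Theory Num.Theory.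
Import numFieldNormedType.Exports.
Local Open Scope classical_set_scope.
Local Open Scope ring_scope.

Lemma bset_bound (R : realType) (V : normedModType R) (A : set V) :
  bounded_set A -> exists M, forall p, A p -> `|p| <= M.
Proof.
case=> M [Mr HM]; exists (M + 1) => p Ap.
by apply: (HM (M+1)) => //; rewrite ltrDl.
Qed.

Lemma Om_compact (R : realType) d (Om : set 'rV[R]_d) :
  closure_of_bounded_domain Om -> compact Om.
Proof.
case=> D [_ _ _ /bset_bound [M HM] ->].
apply: bounded_closed_compact; last exact: closed_closure.
set r := `|M| + 1.
have cl : closed (closed_ball_ Num.norm (0:'rV[R]_d) r) by exact: closed_closed_ball_.
have sub : closure D `<=` closed_ball_ Num.norm (0:'rV[R]_d) r.
  rewrite ((closure_id _).1 cl); apply: closureS => p Dp.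
  rewrite /closed_ball_ /= sub0r normrN.
  by apply: (le_trans (HM p Dp)); apply: (le_trans (ler_norm M)); rewrite lerDl.
exists r; split; first by rewrite realE addr_ge0.
move=> r' Mr p /sub; rewrite /closed_ball_ /= sub0r normrN => H.
exact: (le_trans H (ltW Mr)).
Qed.

Lemma cont_bound (R : realType) d (Om : set 'rV[R]_d) (g : 'rV[R]_d -> R) :
  compact Om -> contOn Om g -> exists B, forall y, Om y -> `|g y| <= B.
Proof.
move=> cO cg.
have := continuous_compact cg cO => /compact_bounded /bset_bound [B HB].
by exists B => y Oy; apply: HB; exists y.
Qed.

Lemma K_bound (R : realType) d (Om : set 'rV[R]_d) (K : set ('rV[R]_d -> R)) :
  compact Om -> compactC Om K ->
  exists M, forall a, K a -> forall y, Om y -> `|a y| <= M.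
Proof.
move=> cO [Kc Kcomp].
have := (compact_near_coveringP _).1 Kcomp R (pinfty_nbhs R)
  (fun M (a : {uniform` Om -> R}) => forall y, Om y -> `|a y| <= M) _.
case.
- move=> a Ka.
  have [B HB] := @cont_bound R d Om a cO (Kc a Ka).
  near=> a' M.
  have Ha' : forall y, Om y -> ball (a y) 1 (a' y).
    near: a'.
    apply: (proj2 (@uniform_nbhs _ Om R a _)); exists [set xy : R * R | ball xy.1 1 xy.2].
    split; first exact: (@entourage_ball R R 1%:pos).
    by move=> h /= Hh; exact: Hh.
  move=> y Oy; move: (Ha' y Oy).
  rewrite /ball /= => H.
  have : `|a' y| <= `|a y| + 1.
    have -> : a' y = a y - (a y - a' y) by rewrite opprB addrC subrK.
    by apply: (le_trans (ler_normB _ _)); rewrite lerD2l ltW.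
  move=> /le_trans; apply.
  apply: (@le_trans _ _ (B + 1)); first by rewrite lerD2r HB.
  near: M; apply: nbhs_pinfty_ge; exact: num_real.
- move=> M [_ HM]; exists (M + 1) => a Ka y Oy.
  by apply: (HM (M + 1)) => //; rewrite ltrDl.
Unshelve. all: by end_near.
Qed.

Section helpers.
Variables (R : realType) (d : nat) (Om : set 'rV[R]_d).

Definition bnd (g : 'rV[R]_d -> R) := exists B, forall y, Om y -> `|g y| <= B.

Lemma supnorm_ge g : bnd g -> forall y, Om y -> `|g y| <= supnorm Om g.
Proof.
move=> [B HB] y Oy; apply: ub_le_sup; last by exists y.
by exists B => _ [z Oz <-]; apply: HB.
Qed.

Lemma supnorm_le g B : 0 <= B -> (forall y, Om y -> `|g y| <= B) ->
  supnorm Om g <= B.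
Proof.
move=> B0 HB; rewrite /supnorm.
have [[y Oy]|] := pselect (Om !=set0).
  by apply: ge_sup; [exists `|g y|; exists y | move=> _ [z Oz <-]; apply: HB].
move=> /set0P/negP; rewrite negbK => /eqP ->; by rewrite image_set0 sup0.
Qed.

Lemma supnorm_ge0 g : 0 <= supnorm Om g.
Proof.
rewrite /supnorm; have [hs|hs] := pselect (has_sup [set `|g x| | x in Om]).
  case: (hs) => [[r Hr] _]; case: Hr => y Oy Hy; apply: (le_trans (normr_ge0 (g y))); rewrite Hy.
  by apply: sup_upper_bound => //; exists y.
by rewrite sup_out.
Qed.

Lemma bndB g h : bnd g -> bnd h -> bnd (g \- h).
Proof.
move=> [B HB] [B' HB']; exists (B + B') => y Oy /=.
by apply: (le_trans (ler_normB _ _)); apply: lerD; [apply: HB|apply: HB'].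
Qed.

Lemma distC_le a (S : set ('rV[R]_d -> R)) g : S g ->
  distC Om a S <= supnorm Om (a \- g).
Proof.
move=> Sg; rewrite /distC; apply: ge_inf; last by exists g.
by exists 0 => _ [h _ <-]; apply: supnorm_ge0.
Qed.

Lemma distC_ge0 a (S : set ('rV[R]_d -> R)) g : S g -> 0 <= distC Om a S.
Proof.
move=> Sg; apply: lb_le_inf; first by exists (supnorm Om (a \- g)); exists g.
by move=> _ [h _ <-]; apply: supnorm_ge0.
Qed.

End helpers.

Lemma chebR_ge0 (R : realType) d (X : normedModType R) (iota : ('rV[R]_d -> R) -> X)
  (S : set ('rV[R]_d -> R)) g0 : S g0 -> 0 <= chebR iota S.
Proof.
move=> Sg0; rewrite /chebR.
set T := [set r | _].
have [ne|e] := pselect (T !=set0).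
  apply: lb_le_inf => // r [z Hz]; exact: le_trans (Hz g0 Sg0).
have -> : T = set0 by apply/seteqP; split => // r Tr; apply: e; exists r.
by rewrite inf0.
Qed.

Lemma vnorm_le (R : realType) m (v : 'I_m -> R) t :
  0 <= t -> (forall j, `|v j| <= t) -> vnorm v <= t.
Proof.
move=> t0 Hv; rewrite /vnorm -(ger0_norm t0) -sqrtr_sqr ler_sqrt ?sqr_ge0 //.
apply: (@le_trans _ _ (m%:R^-1 * (m%:R * t ^+ 2))).
  rewrite ler_wpM2l ?invr_ge0 ?ler0n //.
  apply: (@le_trans _ _ (\sum_(j < m) t ^+ 2)).
    by apply: ler_sum => j _; rewrite !expr2; apply: ler_pM.
  by rewrite sumr_const card_ord mulr_natl.
case: m v Hv => [|m'] v Hv; first by rewrite mul0r mulr0 sqr_ge0.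
by rewrite mulKf ?pnatr_eq0.
Qed.


Lemma vnorm_sq (R : realType) m (v : 'I_m -> R) :
  vnorm v ^+ 2 = m%:R^-1 * \sum_(j < m) `|v j| ^+ 2.
Proof. by rewrite sqr_sqrtr // mulr_ge0 ?invr_ge0 ?sumr_ge0. Qed.

Lemma vnorm_ge0 (R : realType) m (v : 'I_m -> R) : 0 <= vnorm v.
Proof. exact: sqrtr_ge0. Qed.

Lemma vnorm_tri (R : realType) m (v u : 'I_m -> R) s : 0 <= s ->
  (forall j, `|v j| <= s + `|u j|) -> vnorm v ^+ 2 <= 2 * s ^+ 2 + 2 * vnorm u ^+ 2.
Proof.
move=> s0 H; rewrite !vnorm_sq.
apply: (@le_trans _ _ (m%:R^-1 * \sum_(j < m) (2 * s ^+ 2 + 2 * `|u j| ^+ 2))).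
  rewrite ler_wpM2l ?invr_ge0 ?ler0n //; apply: ler_sum => j _.
  have h1 : `|v j| ^+ 2 <= (s + `|u j|) ^+ 2.
    by rewrite !expr2; apply: ler_pM.
  apply: (le_trans h1); have := normr_ge0 (u j); set c := `|u j|; move=> c0.
  have := sqr_ge0 (s - c); rewrite !expr2 => hh; nra.
rewrite big_split /= sumr_const card_ord -mulr_sumr mulrDr.
rewrite [m%:R^-1 * (2 * _)]mulrCA; apply: lerD; last by [].
case: m v u H => [|m'] v u H; first by rewrite mulr0n mulr0 mulr_ge0 ?sqr_ge0.
by rewrite -[2 * s ^+ 2 *+ _]mulr_natl mulKf ?pnatr_eq0.
Qed.

Lemma contOn_scale (R : realType) d (Om : set 'rV[R]_d) g (a : R) :
  contOn Om g -> contOn Om (fun y => a * g y).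
Proof.
move=> cg; rewrite /contOn => y.
apply: cvgM; [exact: cvg_cst | exact: cg].
Qed.

Lemma contOn_add (R : realType) d (Om : set 'rV[R]_d) g h :
  contOn Om g -> contOn Om h -> contOn Om (g \+ h).
Proof.
move=> cg ch; rewrite /contOn => y.
apply: cvgD; [exact: cg | exact: ch].
Qed.

Arguments bnd {R d} Om g.
Arguments supnorm_le {R d Om g} B _ _.
Arguments supnorm_ge0 {R d} Om g.
Arguments distC_le {R d Om a S g} _.
Arguments distC_ge0 {R d Om a S g} _.
Arguments chebR_ge0 {R d X iota S} g0 _.
Arguments vnorm_le {R m v t} _ _.
Arguments vnorm_tri {R m v u s} _ _.
Unset Implicit Arguments.

Theorem theorem4p5 (R : realType) (d m : nat) (Om : set 'rV[R]_d)
  (X : completeNormedModType R) (iota : ('rV[R]_d -> R) -> X) (CX : R)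
  (K : set ('rV[R]_d -> R)) (x : 'I_m -> 'rV[R]_d) (f : 'rV[R]_d -> R)
  (C delta : R) (Sigma : set ('rV[R]_d -> R)) (fhat : 'rV[R]_d -> R) :
  closure_of_bounded_domain Om ->
  (* C(Omega) embeds linearly, injectively and continuously into X *)
  (forall g h, contOn Om g -> contOn Om h -> iota (g \+ h) = iota g + iota h) ->
  (forall (a : R) g, contOn Om g -> iota (fun y => a * g y) = a *: iota g) ->
  (forall g, contOn Om g -> iota g = 0 -> forall y, Om y -> g y = 0) ->
  (forall g, contOn Om g -> `|iota g| <= CX * supnorm Om g) ->
  compactC Om K ->
  (forall j, Om (x j)) ->
  K f ->
  chebR iota (Kfib x K (lam x f)) != 0 ->
  2 < C -> 0 < delta ->
  CX * (2 * delta) + 2 * chebR iota (Knbhd x K (lam x f) (2 * (2 * delta)))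
    <= C * chebR iota (Kfib x K (lam x f)) ->
  (forall g, Sigma g -> contOn Om g) ->
  distCset Om K Sigma < delta ->
  Sigma fhat ->
  (forall g, Sigma g -> Lprime Om x K (lam x f) fhat <= Lprime Om x K (lam x f) g) ->
  `|iota f - iota fhat| <= C * chebR iota (Kfib x K (lam x f)).
Proof.
move=> hOm hadd hscal _ hbnd hK hx Kf _ C2 d0 hC hSig hdist Sfh hmin.
have cO := Om_compact hOm.
case: (hK) => Kc _.
have [MK HMK] := K_bound cO hK.
have bndc : forall g, contOn Om g -> bnd Om g := fun g cg => cont_bound cO cg.
have cfh := hSig fhat Sfh.
have cf := Kc f Kf.
have diffE : forall g h, contOn Om g -> contOn Om h ->
    iota g - iota h = iota (g \+ (fun y => -1 * h y)).
  move=> g h cg ch; rewrite hadd //; last exact: contOn_scale.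
  by rewrite hscal // scaleN1r.
have diffC : forall g h, contOn Om g -> contOn Om h ->
    contOn Om (g \+ (fun y => -1 * h y)).
  by move=> g h cg ch; apply: contOn_add => //; exact: contOn_scale.
have Rf0 : 0 <= chebR iota (Kfib x K (lam x f)) by apply: (chebR_ge0 f).
have [CXn|CX0] := ltP CX 0.
  rewrite (diffE _ _ cf cfh).
  apply: le_trans (hbnd _ (diffC _ _ cf cfh)) _.
  have := supnorm_ge0 Om (f \+ (fun y => -1 * fhat y)).
  set q := supnorm _ _ => q0.
  have : CX * q <= 0 by rewrite mulr_le0_ge0 // ltW.
  move=> h1; apply: (le_trans h1); apply: mulr_ge0 => //; lra.
have distle : distC Om f Sigma <= distCset Om K Sigma.
  apply: ub_le_sup; last by exists f.
  have [Bfh HBfh] := cont_bound cO cfh.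
  exists (`|MK| + `|Bfh|) => _ [a Ka <-].
  apply: le_trans (distC_le Sfh) _.
  apply: supnorm_le; first exact: addr_ge0.
  move=> y Oy /=; apply: (le_trans (ler_normB _ _)); apply: lerD.
    exact: le_trans (HMK a Ka y Oy) (ler_norm _).
  exact: le_trans (HBfh y Oy) (ler_norm _).
have [g Sg hg] : exists2 g, Sigma g & supnorm Om (f \- g) < delta.
  have := @inf_lt _ [set supnorm Om (f \- h) | h in Sigma] delta.
  case.
  - by exists (supnorm Om (f \- fhat)); exists fhat.
  - exact: le_lt_trans distle hdist.
  by move=> _ [g Sg <-] H; exists g.
have cg := hSig g Sg.
set t := supnorm Om (f \- g) in hg.
have bfg : bnd Om (f \- g) := bndB (bndc f cf) (bndc g cg).
have ht : forall y, Om y -> `|f y - g y| <= t := supnorm_ge bfg.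
have t0 : 0 <= t := supnorm_ge0 Om _.
have h1 : vnorm (vsub (lam x g) (lam x f)) <= t.
  by apply: vnorm_le => // j; rewrite /vsub /lam distrC; exact: ht.
have h2 : distC Om g K <= t.
  apply: le_trans (distC_le Kf) _; apply: supnorm_le => // y Oy /=.
  by rewrite distrC; exact: ht.
have hL := hmin g Sg; rewrite /Lprime in hL.
set a := vnorm (vsub (lam x fhat) (lam x f)) in hL.
set b := distC Om fhat K in hL.
have a0 : 0 <= a := vnorm_ge0 _ _.
have [h Kh hs] : exists2 h, K h & supnorm Om (fhat \- h) < 2 * delta - a.
  have := @inf_lt _ [set supnorm Om (fhat \- h) | h in K] (2 * delta - a).
  case.
  - by exists (supnorm Om (fhat \- f)); exists f.
  - rewrite -/(distC Om fhat K) -/b; lra.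
  by move=> _ [h Kh <-] H; exists h.
have ch := Kc h Kh.
set s := supnorm Om (fhat \- h) in hs.
have bfh : bnd Om (fhat \- h) := bndB (bndc fhat cfh) (bndc h ch).
have hs' : forall y, Om y -> `|fhat y - h y| <= s := supnorm_ge bfh.
have s0 : 0 <= s := supnorm_ge0 Om _.
have hN : Knbhd x K (lam x f) (2 * (2 * delta)) h.
  exists (lam x h); last by split.
  rewrite /=.
  have hv : vnorm (vsub (lam x h) (lam x f)) ^+ 2 <= 2 * s ^+ 2 + 2 * a ^+ 2.
    apply: (@vnorm_tri _ _ _ (vsub (lam x fhat) (lam x f)) s s0) => j; rewrite /vsub /lam.
    have -> : h (x j) - f (x j) = (h (x j) - fhat (x j)) + (fhat (x j) - f (x j)).
      by rewrite addrA subrK.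
    apply: (le_trans (ler_normD _ _)); rewrite lerD2r distrC; exact: hs'.
  move: hv; set v := vnorm _ => hv.
  have v0 : 0 <= v := vnorm_ge0 _ _.
  have sa : s + a < 2 * delta by lra.
  have : s ^+ 2 + a ^+ 2 <= (s + a) ^+ 2 by rewrite !expr2; nra.
  have : (s + a) ^+ 2 < (2 * delta) ^+ 2.
    rewrite !expr2; apply: ltr_pM => //; by rewrite addr_ge0.
  rewrite !expr2 in hv * => q1 q2; nra.
have fN : Knbhd x K (lam x f) (2 * (2 * delta)) f.
  exists (lam x f); last by split.
  rewrite /=; apply: (@le_trans _ _ 0); last lra.
  by apply: vnorm_le => // j; rewrite /vsub subrr normr0.
have hc : `|iota f - iota h| <= 2 * chebR iota (Knbhd x K (lam x f) (2 * (2 * delta))).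
  rewrite /chebR; set T := [set r | _].
  have Tne : T !=set0.
    exists (CX * `|MK|), 0 => g' [w' _ [Kg' _]].
    rewrite subr0; apply: le_trans (hbnd _ (Kc _ Kg')) _.
    apply: ler_wpM2l => //; apply: supnorm_le => // y Oy.
    exact: le_trans (HMK g' Kg' y Oy) (ler_norm _).
  have : `|iota f - iota h| / 2 <= inf T.
    apply: lb_le_inf Tne _ => r [z Hz].
    have := Hz f fN; have := Hz h hN.
    have e : iota f - iota h = (iota f - z) + (z - iota h) by rewrite addrA subrK.
    have := ler_normD (iota f - z) (z - iota h); rewrite -e [`|z - iota h|]distrC.
    move=> q1 q2 q3; lra.
  move=> q; lra.
have hd : `|iota h - iota fhat| <= CX * s.
  rewrite (diffE _ _ ch cfh); apply: le_trans (hbnd _ (diffC _ _ ch cfh)) _.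
  apply: ler_wpM2l => //; apply: supnorm_le => // y Oy /=.
  by rewrite mulN1r distrC; exact: hs'.
have hCX : CX * s <= CX * (2 * delta) by apply: ler_wpM2l => //; lra.
have e : iota f - iota fhat = (iota f - iota h) + (iota h - iota fhat) by rewrite addrA subrK.
rewrite e; apply: (le_trans (ler_normD _ _)); lra.
Qed.
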